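(* Let $0<\nu<1$ and $0\le\mu<1$. Then for all $t>0$, $$t\,f_{\nu,\mu-1}(t)=(\mu-1)\,f_{\nu,\mu}(t)+\nu\, f_{\nu,\mu-\nu}(t),$$ and, since $\frac{d}{dt}f_{\nu,\mu}(t)=f_{\nu,\mu-1}(t)$, $$t\,\frac{d f_{\nu,\mu}(t)}{dt}=(\mu-1)\,f_{\nu,\mu}(t)+\nu\, f_{\nu,\mu-\nu}(t).$$
   Context: For $0<\nu<1$ and real $\rho$, $f_{\nu,\rho}$ denotes the inverse Laplace transform of $s^{-\rho}e^{-s^{\nu}}$: $f_{\nu,\rho}(t)=\frac{1}{2\pi i}\int_{c-i\infty}^{c+i\infty}e^{st}s^{-\rho}e^{-s^{\nu}}\,ds$, $t>0$, $c>0$, principal branches (absolutely convergent for every real $\rho$). *)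

(* Defs.v *)
From Stdlib Require Import Reals.
From Coquelicot Require Import Coquelicot.
Open Scope R_scope.

Definition Cexp (z : C) : C :=
  (exp (Re z) * cos (Im z), exp (Re z) * sin (Im z)).

(* principal argument, in (-PI, PI] *)
Definition Carg (z : C) : R :=
  let x := Re z in let y := Im z in
  if Rlt_dec 0 x then atan (y / x)
  else if Rlt_dec x 0 then
         (if Rle_dec 0 y then atan (y / x) + PI else atan (y / x) - PI)
  else if Rlt_dec 0 y then PI / 2
  else if Rlt_dec y 0 then - (PI / 2)
  else 0.

(* principal logarithm (only used away from 0) *)
Definition Clog (z : C) : C := (ln (Cmod z), Carg z).

Definition Cpow (s : C) (a : R) : C := Cexp (RtoC a * Clog s).

(* f_{nu,rho}(t) = (1/(2 pi i)) \int_{c - i oo}^{c + i oo} e^{s t} s^{-rho} e^{-s^nu} ds.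
   Parametrising s = c + i y gives ds = i dy, hence
   f_{nu,rho}(t) = (1/(2 pi)) \int_{-oo}^{+oo} e^{(c+iy) t} (c+iy)^{-rho} e^{-(c+iy)^nu} dy,
   taken as an improper Riemann integral over the whole line. *)
Definition bromwich_integrand (nu rho c t : R) (y : R) : C :=
  let s : C := (c, y) in
  (Cexp (RtoC t * s) * Cpow s (- rho) * Cexp (- Cpow s nu))%C.

Definition f_nu_rho (nu rho c t : R) : C :=
  (RtoC (/ (2 * PI)) *
   @RInt_gen C_R_CompleteNormedModule (bromwich_integrand nu rho c t)
            (Rbar_locally m_infty) (Rbar_locally p_infty))%C.

(* Main.v *)
Require Import Defs.
From Stdlib Require Import Reals Lra FunctionalExtensionality.
From Coquelicot Require Import Coquelicot.
Open Scope R_scope.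

Ltac fixR := match goal with |- @eq _ ?u ?v => change (@eq R u v) end.
Ltac fixC := match goal with |- @eq _ ?u ?v => change (@eq C u v) end.

Lemma dR_mult (f g : R -> R) x df dg : is_derive f x df -> is_derive g x dg ->
  is_derive (fun y => f y * g y) x (df * g x + f x * dg).
Proof. intros Hf Hg. apply (is_derive_mult f g x df dg Hf Hg). intros; apply Rmult_comm. Qed.

Lemma dR_plus (f g : R -> R) x df dg : is_derive f x df -> is_derive g x dg ->
  is_derive (fun y => f y + g y) x (df + dg).
Proof. intros Hf Hg. apply (is_derive_plus f g x df dg Hf Hg). Qed.

Lemma dR_minus (f g : R -> R) x df dg : is_derive f x df -> is_derive g x dg ->
  is_derive (fun y => f y - g y) x (df - dg).
Proof. intros Hf Hg. apply (is_derive_minus f g x df dg Hf Hg). Qed.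

Lemma dR_eq (f : R -> R) x l l' : is_derive f x l -> l = l' -> is_derive f x l'.
Proof. intros H ->; exact H. Qed.

Lemma dC_eq (f : R -> C) x l l' : is_derive f x l -> l = l' -> is_derive f x l'.
Proof. intros H ->; exact H. Qed.

Lemma is_derive_C (u : R -> C) x (l : C) :
  is_derive (fun y => fst (u y)) x (fst l) -> is_derive (fun y => snd (u y)) x (snd l) ->
  is_derive u x l.
Proof.
  intros H1 H2. destruct l as [a b].
  assert (Hl : filterdiff (fun t : prod_NormedModule R_AbsRing R_NormedModule R_NormedModule => (fst t, snd t) : C_R_NormedModule)
     (locally (fst (u x), snd (u x))) (fun t : prod_NormedModule R_AbsRing R_NormedModule R_NormedModule => (fst t, snd t) : C_R_NormedModule)).
  { apply filterdiff_linear. split; [intros; reflexivity| intros; reflexivity|].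
    exists 1. split; [lra|]. intros [p q]. rewrite Rmult_1_l. apply Rle_refl. }
  assert (H := @filterdiff_comp'_2 R_AbsRing (AbsRing_NormedModule R_AbsRing) R_NormedModule R_NormedModule C_R_NormedModule (fun y => fst (u y)) (fun y => snd (u y))
     (fun p q => (p, q) : C_R_NormedModule) x _ _ (fun p q => (p,q) : C_R_NormedModule) H1 H2 Hl).
  unfold is_derive.
  assert (E : forall y, (fst (u y), snd (u y)) = u y) by (intros y; destruct (u y); reflexivity).
  refine (filterdiff_ext_locally _ u x _ _ H). 
  apply filter_forall. exact E. 
Qed.
Lemma is_derive_fst (u : R -> C) x (l : C) : is_derive u x l -> is_derive (fun y => fst (u y)) x (fst l).
Proof.
  intros H. unfold is_derive.
  exact (@filterdiff_comp' R_AbsRing (AbsRing_NormedModule R_AbsRing) C_R_NormedModule R_NormedModule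
     u (fun z => fst z) x (fun y => scal y l) (fun z => fst z) H
     (filterdiff_linear _ (is_linear_fst))).
Qed.

Lemma is_derive_snd (u : R -> C) x (l : C) : is_derive u x l -> is_derive (fun y => snd (u y)) x (snd l).
Proof.
  intros H. unfold is_derive.
  exact (@filterdiff_comp' R_AbsRing (AbsRing_NormedModule R_AbsRing) C_R_NormedModule R_NormedModule
     u (fun z => snd z) x (fun y => scal y l) (fun z => snd z) H
     (filterdiff_linear _ (is_linear_snd))).
Qed.

Lemma dR_comp (f g : R -> R) x df dg : is_derive f (g x) df -> is_derive g x dg ->
  is_derive (fun y => f (g y)) x (dg * df).
Proof. intros Hf Hg. exact (is_derive_comp f g x df dg Hf Hg). Qed.

Lemma dR_fst_pair (u : R -> C) x l : is_derive u x l -> is_derive (fun y => fst (u y)) x (fst l).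
Proof. apply is_derive_fst. Qed.

Lemma dC_mult (u v : R -> C) x du dv : is_derive u x du -> is_derive v x dv ->
  is_derive (fun y => (u y * v y)%C) x (du * v x + u x * dv)%C.
Proof.
  intros Hu Hv.
  assert (U1 := is_derive_fst _ _ _ Hu). assert (U2 := is_derive_snd _ _ _ Hu).
  assert (V1 := is_derive_fst _ _ _ Hv). assert (V2 := is_derive_snd _ _ _ Hv).
  apply is_derive_C.
  - eapply dR_eq.
    apply (is_derive_ext (fun y => fst (u y) * fst (v y) - snd (u y) * snd (v y))).
    intros; reflexivity.
    apply dR_minus; apply dR_mult; [exact U1|exact V1|exact U2|exact V2].
    simpl; ring.
  - eapply dR_eq.
    apply (is_derive_ext (fun y => fst (u y) * snd (v y) + snd (u y) * fst (v y))).
    intros; reflexivity.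
    apply dR_plus; apply dR_mult; [exact U1|exact V2|exact U2|exact V1].
    simpl; ring.
Qed.

Lemma dCexp (w : R -> C) x dw : is_derive w x dw ->
  is_derive (fun y => Cexp (w y)) x (dw * Cexp (w x))%C.
Proof.
  intros Hw.
  assert (W1 := is_derive_fst _ _ _ Hw). assert (W2 := is_derive_snd _ _ _ Hw).
  apply is_derive_C.
  - eapply dR_eq.
    apply (is_derive_ext (fun y => exp (fst (w y)) * cos (snd (w y)))).
    intros; reflexivity.
    apply dR_mult; [apply (dR_comp exp (fun y => fst (w y))); [apply is_derive_exp|exact W1] | apply (dR_comp cos (fun y => snd (w y))); [apply is_derive_cos|exact W2]].
    unfold Cexp, Re, Im; simpl; ring.
  - eapply dR_eq.
    apply (is_derive_ext (fun y => exp (fst (w y)) * sin (snd (w y)))).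
    intros; reflexivity.
    apply dR_mult; [apply (dR_comp exp (fun y => fst (w y))); [apply is_derive_exp|exact W1] | apply (dR_comp sin (fun y => snd (w y))); [apply is_derive_sin|exact W2]].
    unfold Cexp, Re, Im; simpl; ring.
Qed.

Lemma dR_const (a : R) x : is_derive (fun _ : R => a) x 0.
Proof. exact (is_derive_const (V:=R_NormedModule) a x). Qed.

Lemma dR_id x : is_derive (fun y : R => y) x 1.
Proof. exact (is_derive_id (K:=R_AbsRing) x). Qed.

Lemma dC_const (k : C) x : is_derive (fun _ : R => k) x (RtoC 0).
Proof. apply is_derive_C; simpl; apply dR_const. Qed.

Lemma dRtoC x : is_derive (fun y : R => RtoC y) x (RtoC 1).
Proof. apply is_derive_C; simpl. apply dR_id. apply dR_const. Qed.

Lemma dline (c x : R) : is_derive (fun y : R => (c, y) : C) x Ci.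
Proof. apply is_derive_C; simpl. apply dR_const. apply dR_id. Qed.

Lemma dC_plus (u v : R -> C) x du dv : is_derive u x du -> is_derive v x dv ->
  is_derive (fun y => (u y + v y)%C) x (du + dv)%C.
Proof. intros Hu Hv. exact (is_derive_plus u v x du dv Hu Hv). Qed.

Lemma dC_minus (u v : R -> C) x du dv : is_derive u x du -> is_derive v x dv ->
  is_derive (fun y => (u y - v y)%C) x (du - dv)%C.
Proof. intros Hu Hv. exact (is_derive_minus u v x du dv Hu Hv). Qed.

Lemma Cexp_add (z w : C) : Cexp (z + w) = (Cexp z * Cexp w)%C.
Proof.
  destruct z as [a b], w as [p q]. unfold Cexp, Re, Im; simpl.
  rewrite exp_plus, cos_plus, sin_plus. apply injective_projections; simpl; ring.
Qed.

Lemma Cexp_0 : Cexp (RtoC 0) = RtoC 1.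
Proof. unfold Cexp, Re, Im; simpl. rewrite exp_0, cos_0, sin_0. apply injective_projections; simpl; ring. Qed.

Lemma Cmod_Cexp (z : C) : Cmod (Cexp z) = exp (Re z).
Proof.
  unfold Cexp, Cmod; cbn [fst snd].
  replace ((exp (Re z) * cos (Im z)) ^ 2 + (exp (Re z) * sin (Im z)) ^ 2) with (exp (Re z) * exp (Re z)).
  apply sqrt_square. left; apply exp_pos.
  transitivity (exp (Re z) * exp (Re z) * (sin (Im z) ^2 + cos (Im z) ^ 2)).
  replace (sin (Im z) ^2 + cos (Im z) ^ 2) with 1. ring. rewrite <- (sin2_cos2 (Im z)). unfold Rsqr. ring. ring.
Qed.

Lemma Carg_line (c y : R) : 0 < c -> Carg (c, y) = atan (y / c).
Proof. intros Hc. unfold Carg, Re, Im; simpl. destruct (Rlt_dec 0 c); [reflexivity|lra]. Qed.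

Lemma Clog_line (c y : R) : 0 < c -> Clog (c, y) = (ln (sqrt (c ^ 2 + y ^ 2)), atan (y / c)).
Proof. intros Hc. unfold Clog. rewrite Carg_line by exact Hc. reflexivity. Qed.

Lemma sqrt_line_pos (c y : R) : 0 < c -> 0 < sqrt (c ^ 2 + y ^ 2).
Proof. intros Hc. apply sqrt_lt_R0. nra. Qed.

Lemma sqrt_line_ge (c y : R) : 0 < c -> c <= sqrt (c ^ 2 + y ^ 2).
Proof.
  intros Hc. rewrite <- (sqrt_square c) at 1 by lra. apply sqrt_le_1_alt. nra.
Qed.

Lemma Cexp_Clog_line (c y : R) : 0 < c -> Cexp (Clog (c, y)) = (c, y).
Proof.
  intros Hc. rewrite Clog_line by exact Hc. unfold Cexp, Re, Im; cbn [fst snd].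
  set (r := sqrt (c ^ 2 + y ^ 2)).
  assert (Hr : 0 < r) by (apply sqrt_line_pos; exact Hc).
  assert (Hr2 : r * r = c ^ 2 + y ^ 2) by (apply sqrt_sqrt; nra).
  rewrite exp_ln by exact Hr. rewrite cos_atan, sin_atan.
  assert (E : sqrt (1 + (y / c)²) = r / c).
  { replace (1 + (y / c)²) with ((r / c) * (r / c)).
    apply sqrt_square. apply Rlt_le, Rdiv_lt_0_compat; lra.
    transitivity ((r * r) / (c * c)). field. lra. rewrite Hr2. unfold Rsqr. field. lra. }
  rewrite E. apply injective_projections; cbn [fst snd]; field; split; lra.
Qed.

Lemma Cpow_add (s : C) (a b : R) : (Defs.Cpow s a * Defs.Cpow s b)%C = Defs.Cpow s (a + b).
Proof. unfold Defs.Cpow. rewrite <- Cexp_add. f_equal. rewrite RtoC_plus. ring. Qed.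

Lemma Cpow_one_line (c y : R) : 0 < c -> Defs.Cpow (c, y) 1 = (c, y).
Proof.
  intros Hc. unfold Defs.Cpow. rewrite <- (Cexp_Clog_line c y Hc) at 2. f_equal.
  apply injective_projections; simpl; ring.
Qed.

Lemma Cmod_Cpow_line (c y a : R) : 0 < c -> Cmod (Defs.Cpow (c, y) a) = exp (a * ln (sqrt (c ^ 2 + y ^ 2))).
Proof.
  intros Hc. unfold Defs.Cpow. rewrite Cmod_Cexp, Clog_line by exact Hc.
  unfold Re; simpl. f_equal. ring.
Qed.

Lemma dClog_line (c x : R) : 0 < c ->
  is_derive (fun y => Clog (c, y)) x (x / (c ^ 2 + x ^ 2), c / (c ^ 2 + x ^ 2)).
Proof.
  intros Hc.
  apply (is_derive_ext (fun y => (ln (sqrt (c ^ 2 + y ^ 2)), atan (y / c)) : C)).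
  intros y. rewrite Clog_line by exact Hc. reflexivity.
  apply is_derive_C; cbn [fst snd].
  - assert (Hp := sqrt_line_pos c x Hc).
    assert (Hr2 : sqrt (c ^ 2 + x ^ 2) * sqrt (c ^ 2 + x ^ 2) = c ^ 2 + x ^ 2) by (apply sqrt_sqrt; nra).
    auto_derive; replace (c * (c * 1) + x * (x * 1)) with (c ^ 2 + x ^ 2) by ring.
    repeat split; [nra|lra].
    set (S := sqrt (c ^ 2 + x ^ 2)) in *. rewrite <- Hr2. field. lra.
  - auto_derive. lra. field. split; [|lra]. replace (c * c + x * x) with (c ^ 2 + x ^ 2) by ring. nra. 
Qed.

Lemma Cpow_pred_line (c y a : R) : 0 < c ->
  Defs.Cpow (c, y) a = (Defs.Cpow (c, y) (a - 1) * (c, y))%C.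
Proof.
  intros Hc. rewrite <- (Cpow_one_line c y Hc) at 3. rewrite Cpow_add. f_equal; ring.
Qed.

Lemma dCpow_aux (a : R) (L P q s : C) :
  ((RtoC 0 * q + RtoC a * L) * (P * s) = RtoC a * (L * s) * P)%C.
Proof. ring. Qed.

Lemma dCpow_aux2 (s E : C) (x : R) : ((RtoC 1 * s + RtoC x * RtoC 0) * E = s * E)%C.
Proof. ring. Qed.

Lemma dCpow_line (c x a : R) : 0 < c ->
  is_derive (fun y => Defs.Cpow (c, y) a) x (RtoC a * Ci * Defs.Cpow (c, x) (a - 1))%C.
Proof.
  intros Hc. unfold Defs.Cpow at 1.
  eapply dC_eq.
  apply (dCexp (fun y => (RtoC a * Clog (c, y))%C)).
  apply dC_mult. apply dC_const. apply dClog_line. exact Hc.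
  fold (Defs.Cpow (c, x) a). rewrite (Cpow_pred_line c x a Hc).
  set (P := Defs.Cpow (c, x) (a - 1)).
  set (L := (x / (c ^ 2 + x ^ 2), c / (c ^ 2 + x ^ 2)) : C).
  assert (HL : (L * (c, x) = Ci)%C).
  { assert (0 < c ^ 2 + x ^ 2) by nra.
    apply injective_projections; simpl; field; lra. }
  rewrite dCpow_aux. rewrite HL. reflexivity.
Qed.

Lemma dC_opp (u : R -> C) x du : is_derive u x du -> is_derive (fun y => (- u y)%C) x (- du)%C.
Proof. intros Hu. exact (is_derive_opp u x du Hu). Qed.

Definition Gf (nu rho c t y : R) : C :=
  (Cexp (RtoC t * (c, y)) * Defs.Cpow (c, y) (- rho) * Cexp (- Defs.Cpow (c, y) nu))%C.

Lemma G_eq nu rho c t y : bromwich_integrand nu rho c t y = Gf nu rho c t y.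
Proof. reflexivity. Qed.

Lemma dGf_aux (t rho nu : R) (A B E B1 P1 Ci' : C) :
  ((((RtoC 0 * Ci' + RtoC t * Ci) * A) * B + A * (RtoC (- rho) * Ci * B1)) * E
   + A * B * ((- (RtoC nu * Ci * P1)) * E))%C
  = (Ci * (RtoC t * (A * B * E) - RtoC rho * (A * B1 * E) - RtoC nu * (A * (B * P1) * E)))%C.
Proof. rewrite RtoC_opp. ring. Qed.

Lemma dGf (nu rho c t x : R) : 0 < c ->
  is_derive (fun y => Gf nu rho c t y) x
    (Ci * (RtoC t * Gf nu rho c t x - RtoC rho * Gf nu (rho + 1) c t x
           - RtoC nu * Gf nu (rho + 1 - nu) c t x))%C.
Proof.
  intros Hc. unfold Gf.
  eapply dC_eq.
  apply dC_mult. apply dC_mult.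
  apply (dCexp (fun y => (RtoC t * (c, y))%C)). apply dC_mult. apply dC_const. apply dline.
  apply dCpow_line; exact Hc.
  apply (dCexp (fun y => (- Defs.Cpow (c, y) nu)%C)). apply dC_opp. apply dCpow_line; exact Hc.
  replace (- (rho + 1)) with (- rho - 1) by ring.
  replace (- (rho + 1 - nu)) with (- rho + (nu - 1)) by ring.
  rewrite <- Cpow_add.
  apply dGf_aux.
Qed.

Lemma exp_le' x y : x <= y -> exp x <= exp y.
Proof. intros [H|H]. left; apply exp_increasing; exact H. subst; lra. Qed.

Lemma ln_le' x y : 0 < x -> x <= y -> ln x <= ln y.
Proof. intros Hx [H|H]. left; apply ln_increasing; assumption. subst; lra. Qed.

Lemma growth_bound (q k nu u0 : R) : 0 < k -> 0 < nu ->
  exists C, forall u, u0 <= u -> q * u - k * exp (nu * u) <= C.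
Proof.
  intros Hk Hnu.
  set (m := ln (Rabs q / (k * nu) + 1)).
  assert (Hpos : 0 < Rabs q / (k * nu) + 1).
  { assert (0 <= Rabs q / (k * nu)) by (apply Rdiv_le_0_compat; [apply Rabs_pos | nra]). lra. }
  assert (Em : exp m = Rabs q / (k * nu) + 1) by (apply exp_ln; exact Hpos).
  set (E := exp m) in *.
  assert (HA : k * nu * E = Rabs q + k * nu) by (rewrite Em; field; nra).
  exists ((q - k * nu * E) * u0 - k * E * (1 - m)).
  intros u Hu.
  assert (H1 : exp (nu * u) = E * exp (nu * u - m)).
  { unfold E. rewrite <- exp_plus. f_equal. ring. }
  assert (H2 := exp_ineq1_le (nu * u - m)).
  assert (HE : 0 < E) by (unfold E; apply exp_pos).
  assert (H3 : E * (1 + (nu * u - m)) <= exp (nu * u)) by (rewrite H1; apply Rmult_le_compat_l; lra).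
  assert (Hq : q <= Rabs q) by apply Rle_abs.
  assert (H4 : (q - k * nu * E) * (u - u0) <= 0) by (apply Rmult_le_0_r; [|lra]; rewrite HA; nra).
  nra.
Qed.

Lemma Re_Cpow_line (nu c y : R) : 0 < nu < 1 -> 0 < c ->
  cos (nu * PI / 2) * exp (nu * ln (sqrt (c ^ 2 + y ^ 2))) <= Re (Defs.Cpow (c, y) nu).
Proof.
  intros Hnu Hc. unfold Defs.Cpow. rewrite Clog_line by exact Hc.
  unfold Cexp, Re, Im, Cmult, RtoC; cbn [fst snd].
  replace (nu * ln (sqrt (c ^ 2 + y ^ 2)) - 0 * atan (y / c)) with (nu * ln (sqrt (c ^ 2 + y ^ 2))) by ring.
  replace (nu * atan (y / c) + 0 * ln (sqrt (c ^ 2 + y ^ 2))) with (nu * atan (y / c)) by ring.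
  rewrite Rmult_comm. apply Rmult_le_compat_l. left; apply exp_pos.
  set (th := nu * atan (y / c)).
  assert (Hb := atan_bound (y / c)).
  assert (HPI := PI_RGT_0).
  assert (Hth : Rabs th <= nu * PI / 2).
  { unfold th. rewrite Rabs_mult, (Rabs_right nu) by lra.
    assert (Rabs (atan (y / c)) <= PI / 2) by (apply Rabs_le; lra).
    replace (nu * PI / 2) with (nu * (PI / 2)) by field. apply Rmult_le_compat_l; lra. }
  assert (E : cos th = cos (Rabs th)).
  { unfold Rabs. destruct (Rcase_abs th). rewrite cos_neg. reflexivity. reflexivity. }
  rewrite E. apply cos_decr_1; try lra. apply Rabs_pos. nra. nra. nra.
Qed.

Lemma Cmod_Gf (nu rho c t y : R) : 0 < c ->
  Cmod (Gf nu rho c t y) =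
  exp (t * c) * exp (- rho * ln (sqrt (c ^ 2 + y ^ 2))) * exp (- Re (Defs.Cpow (c, y) nu)).
Proof.
  intros Hc. unfold Gf. rewrite !Cmod_mult, !Cmod_Cexp, Cmod_Cpow_line by exact Hc.
  replace (Re (RtoC t * (c, y))) with (t * c) by (unfold Re, Cmult, RtoC; cbn [fst snd]; ring).
  replace (Re (- Defs.Cpow (c, y) nu)) with (- Re (Defs.Cpow (c, y) nu)) by (unfold Re, Copp; cbn [fst snd]; ring).
  reflexivity.
Qed.

Lemma Gbound (nu c t q : R) : 0 < nu < 1 -> 0 < c ->
  exists K, 0 < K /\ forall y,
    exp (t * c) * exp (q * ln (sqrt (c ^ 2 + y ^ 2))) * exp (- Re (Defs.Cpow (c, y) nu)) <= K / (1 + y ^ 2).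
Proof.
  intros Hnu Hc.
  set (k := cos (nu * PI / 2)).
  assert (Hk : 0 < k).
  { unfold k. assert (HPI := PI_RGT_0). apply cos_gt_0; nra. }
  destruct (growth_bound (q + 2) k nu (ln c) Hk ltac:(lra)) as [C HC].
  set (A0 := 1 + 1 / c ^ 2).
  assert (HA0 : 0 < A0) by (unfold A0; assert (0 < 1 / c ^ 2) by (apply Rdiv_lt_0_compat; nra); lra).
  exists (exp (t * c) * A0 * exp C). split.
  { apply Rmult_lt_0_compat. apply Rmult_lt_0_compat. apply exp_pos. exact HA0. apply exp_pos. }
  intros y.
  set (r := sqrt (c ^ 2 + y ^ 2)).
  assert (Hr : 0 < r) by (apply sqrt_line_pos; exact Hc).
  assert (Hrc : c <= r) by (apply sqrt_line_ge; exact Hc).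
  assert (Hr2 : r * r = c ^ 2 + y ^ 2) by (apply sqrt_sqrt; nra).
  set (u := ln r).
  assert (Hu : ln c <= u) by (apply ln_le'; lra).
  assert (Er : exp (2 * u) = r * r) by (unfold u; rewrite Rmult_comm, <- (exp_ln r Hr) at 1; 
     rewrite exp_ln by exact Hr; replace (ln r * 2) with (ln r + ln r) by ring; rewrite exp_plus, exp_ln by exact Hr; reflexivity).
  assert (HRe := Re_Cpow_line nu c y Hnu Hc). fold r u k in HRe.
  assert (H1 : exp (- Re (Defs.Cpow (c, y) nu)) <= exp (- (k * exp (nu * u)))) by (apply exp_le'; lra).
  assert (Hy : 1 + y ^ 2 <= A0 * exp (2 * u)).
  { rewrite Er, Hr2. unfold A0. assert (0 <= y ^ 2 / c ^ 2) by (apply Rdiv_le_0_compat; nra).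
    replace ((1 + 1 / c ^ 2) * (c ^ 2 + y ^ 2)) with (c ^ 2 + y ^ 2 + 1 + y ^ 2 / c ^ 2) by (field; nra). nra. }
  assert (H2 : exp (q * u) * exp (- (k * exp (nu * u))) * exp (2 * u) <= exp C).
  { rewrite <- !exp_plus. apply exp_le'. specialize (HC u Hu). lra. }
  apply (Rmult_le_reg_r (1 + y ^ 2)). nra.
  replace (exp (t * c) * A0 * exp C / (1 + y ^ 2) * (1 + y ^ 2)) with (exp (t * c) * A0 * exp C) by (field; nra).
  assert (P1 := exp_pos (t * c)). assert (P2 := exp_pos (q * u)). assert (P3 := exp_pos (- Re (Defs.Cpow (c, y) nu))).
  assert (P4 := exp_pos (- (k * exp (nu * u)))). assert (P5 := exp_pos (2 * u)).
  apply Rle_trans with (exp (t * c) * exp (q * u) * exp (- Re (Defs.Cpow (c, y) nu)) * (A0 * exp (2 * u))).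
  { apply Rmult_le_compat_l. left; repeat apply Rmult_lt_0_compat; assumption. exact Hy. }
  apply Rle_trans with (exp (t * c) * exp (q * u) * exp (- (k * exp (nu * u))) * (A0 * exp (2 * u))).
  { apply Rmult_le_compat_r. left; apply Rmult_lt_0_compat; assumption.
    apply Rmult_le_compat_l. left; apply Rmult_lt_0_compat; assumption. exact H1. }
  replace (exp (t * c) * exp (q * u) * exp (- (k * exp (nu * u))) * (A0 * exp (2 * u)))
    with ((exp (t * c) * A0) * (exp (q * u) * exp (- (k * exp (nu * u))) * exp (2 * u))) by ring.
  apply Rmult_le_compat_l. left; apply Rmult_lt_0_compat; assumption. exact H2.
Qed.

Lemma Gf_bound (nu rho c t : R) : 0 < nu < 1 -> 0 < c ->
  exists K, 0 < K /\ forall y, Cmod (Gf nu rho c t y) <= K / (1 + y ^ 2).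
Proof.
  intros Hnu Hc. destruct (Gbound nu c t (- rho) Hnu Hc) as [K [HK HB]].
  exists K. split; [exact HK|]. intros y. rewrite Cmod_Gf by exact Hc. apply HB.
Qed.

Lemma Gf_cont (nu rho c t x : R) : 0 < c ->
  @continuous R_UniformSpace (NormedModule.UniformSpace R_AbsRing C_R_NormedModule) (Gf nu rho c t) x.
Proof.
  intros Hc. apply ex_derive_continuous. eexists. apply dGf. exact Hc.
Qed.

Lemma is_RInt_maj (K a b : R) : is_RInt (fun y => K / (1 + y ^ 2)) a b (K * (atan b - atan a)).
Proof.
  replace (K * (atan b - atan a)) with (minus (K * atan b) (K * atan a)).
  2: { change (K * atan b - K * atan a = K * (atan b - atan a)). ring. }
  apply (is_RInt_derive (fun y => K * atan y)).
  - intros x _. eapply dR_eq. apply is_derive_scal. apply is_derive_atan.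
    fixR. unfold Rsqr; field. nra.
  - intros x _. refine (ex_derive_continuous (V := R_NormedModule) (fun y => K / (1 + y ^ 2)) x _). auto_derive. nra.
Qed.

Lemma norm_RInt_maj (f : R -> C) (K a b : R) (v : C) :
  (forall y, Cmod (f y) <= K / (1 + y ^ 2)) -> a <= b ->
  is_RInt (V := C_R_NormedModule) f a b v -> Cmod v <= K * (atan b - atan a).
Proof.
  intros Hf Hab Hv. rewrite Cmod_norm.
  apply (norm_RInt_le f (fun y => K / (1 + y ^ 2)) a b v _ Hab).
  intros x _. rewrite <- Cmod_norm. apply Hf.
  exact Hv. apply is_RInt_maj.
Qed.

Lemma atan_near (d : R) : 0 < d -> exists M, PI / 2 - d < atan M.
Proof.
  intros Hd. assert (HPI := PI_RGT_0).
  set (e := Rmin (d / 2) (PI / 4)).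
  assert (He1 : 0 < e) by (unfold e; apply Rmin_glb_lt; lra).
  assert (He2 : e <= d / 2) by apply Rmin_l.
  assert (He3 : e <= PI / 4) by apply Rmin_r.
  exists (tan (PI / 2 - e)). rewrite atan_tan by lra. lra.
Qed.

Definition CV := C_R_CompleteNormedModule.

Lemma CV_alg (A B D : CV) : minus (plus A (plus B D)) B = plus A D.
Proof. change (@eq C (Cminus (Cplus A (Cplus B D)) B) (Cplus A D)). ring. Qed.

Lemma CV_ball (X Y : CV) (eps : R) : Cmod (Cminus Y X) < eps -> ball X eps Y.
Proof. intros H. apply (@norm_compat1 R_AbsRing CV). rewrite <- Cmod_norm. exact H. Qed.

Lemma CV_ball2 (X Y : CV) (eps : posreal) : ball X eps Y ->
  Cmod (Cminus Y X) < norm_factor (K := R_AbsRing) (V := C_R_NormedModule) * eps.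
Proof. intros H. rewrite Cmod_norm. apply (@norm_compat2 R_AbsRing C_R_NormedModule). exact H. Qed.

Lemma K_nonneg (f : R -> C) (K : R) : (forall y, Cmod (f y) <= K / (1 + y ^ 2)) -> 0 <= K.
Proof.
  intros H. specialize (H 0). assert (Hm := Cmod_ge_0 (f 0)).
  replace (K / (1 + 0 ^ 2)) with K in H by (simpl; field). lra.
Qed.

Lemma ex_RInt_gen_maj (f : R -> C) (K : R) :
  (forall y, @continuous R_UniformSpace (NormedModule.UniformSpace R_AbsRing C_R_NormedModule) f y) ->
  (forall y, Cmod (f y) <= K / (1 + y ^ 2)) ->
  exists l, is_RInt_gen (V := C_R_NormedModule) f (Rbar_locally m_infty) (Rbar_locally p_infty) l.
Proof.
  intros Hcont Hf.
  assert (HK := K_nonneg f K Hf).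
  assert (Hex : forall a b, ex_RInt (V := CV) f a b).
  { intros a b. apply ex_RInt_continuous. intros z _. exact (Hcont z). }
  set (F := filtermap (fun ab : R * R => RInt (V := CV) f (fst ab) (snd ab))
              (filter_prod (Rbar_locally m_infty) (Rbar_locally p_infty))).
  assert (FF : ProperFilter F).
  { unfold F. apply filtermap_proper_filter. apply filter_prod_proper; apply Rbar_locally_filter. }
  assert (Hc : cauchy F).
  { intros eps.
    set (d := eps / (2 * (K + 1))).
    assert (Hd : 0 < d) by (unfold d; apply Rdiv_lt_0_compat; [apply cond_pos| lra]).
    destruct (atan_near d Hd) as [M HM].
    exists (RInt (V := CV) f (- M) M).
    unfold F, filtermap.
    apply Filter_prod with (fun a => a < - M) (fun b => M < b).
    exists (- M). tauto. exists M. tauto.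
    intros a b Ha Hb. cbn [fst snd]. apply CV_ball.
    rewrite <- (RInt_Chasles (V := CV) f a (- M) b) by apply Hex.
    rewrite <- (RInt_Chasles (V := CV) f (- M) M b) by apply Hex.
    set (A := RInt (V := CV) f a (- M)). set (B := RInt (V := CV) f (- M) M). set (D := RInt (V := CV) f M b).
    change (Cmod (Cminus (Cplus A (Cplus B D)) B) < eps).
    replace (Cminus (Cplus A (Cplus B D)) B) with (Cplus A D) by (clearbody A B D; ring).
    eapply Rle_lt_trans. apply Cmod_triangle.
    assert (H1 : Cmod A <= K * (atan (- M) - atan a)).
    { apply (norm_RInt_maj f K a (- M) A Hf). lra. apply (RInt_correct (V := CV)). apply Hex. }
    assert (H2 : Cmod D <= K * (atan b - atan M)).
    { apply (norm_RInt_maj f K M b D Hf). lra. apply (RInt_correct (V := CV)). apply Hex. }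
    rewrite atan_opp in H1.
    assert (Ha' := atan_bound a). assert (Hb' := atan_bound b).
    assert (Hde : 2 * (K + 1) * d = eps) by (unfold d; field; lra).
    assert (K * (PI / 2 - atan M) <= K * d) by (apply Rmult_le_compat_l; lra).
    nra. }
  exists (lim F).
  intros P [eps Heps].
  assert (H := complete_cauchy F FF Hc eps).
  unfold F, filtermap in H.
  destruct H as [Q R HQ HR HH].
  unfold filtermapi. apply Filter_prod with Q R; [exact HQ|exact HR|].
  intros a b Qa Rb. exists (RInt (V := CV) f a b). split.
  apply (RInt_correct (V := CV)). apply Hex.
  apply Heps. exact (HH a b Qa Rb).
Qed.

Lemma is_RInt_gen_bound (f : R -> C) (K : R) (l : C) :
  (forall y, Cmod (f y) <= K / (1 + y ^ 2)) ->
  is_RInt_gen (V := C_R_NormedModule) f (Rbar_locally m_infty) (Rbar_locally p_infty) l ->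
  Cmod l <= K * PI.
Proof.
  intros Hf Hl.
  assert (HK := K_nonneg f K Hf).
  destruct (Rle_lt_dec (Cmod l) (K * PI)) as [H|H]; [exact H|exfalso].
  set (nf := norm_factor (K := R_AbsRing) (V := C_R_NormedModule)).
  assert (Hnf : 0 < nf) by apply norm_factor_gt_0.
  assert (He : 0 < (Cmod l - K * PI) / (2 * nf)) by (apply Rdiv_lt_0_compat; lra).
  set (e := mkposreal _ He).
  assert (HP : locally l (ball l e)) by (exists e; auto).
  specialize (Hl _ HP). unfold filtermapi in Hl.
  destruct Hl as [Q R HQ HR HH].
  destruct HQ as [M1 HM1]. destruct HR as [M2 HM2].
  set (a := Rmin M1 M2 - 1). set (b := Rmax M1 M2 + 1).
  assert (Ha : a < M1) by (unfold a; assert (Rmin M1 M2 <= M1) by apply Rmin_l; lra).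
  assert (Hb : M2 < b) by (unfold b; assert (M2 <= Rmax M1 M2) by apply Rmax_r; lra).
  assert (Hab : a <= b) by (unfold a, b; assert (Rmin M1 M2 <= M1) by apply Rmin_l; assert (M1 <= Rmax M1 M2) by apply Rmax_l; lra).
  destruct (HH a b (HM1 a Ha) (HM2 b Hb)) as [y [Hy Hby]].
  assert (H1 : Cmod y <= K * (atan b - atan a)) by (apply (norm_RInt_maj f K a b y Hf Hab); exact Hy).
  assert (Ha' := atan_bound a). assert (Hb' := atan_bound b).
  assert (H2 : Cmod y <= K * PI) by (eapply Rle_trans; [exact H1|]; apply Rmult_le_compat_l; lra).
  assert (H3 := CV_ball2 l y e Hby). simpl in H3.
  assert (H4 : Cmod l <= Cmod y + Cmod (Cminus y l)).
  { replace l with (Cplus y (Copp (Cminus y l))) at 1 by ring.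
    eapply Rle_trans. apply Cmod_triangle. rewrite Cmod_opp. lra. }
  assert (H5 : nf * ((Cmod l - K * PI) / (2 * nf)) = (Cmod l - K * PI) / 2) by (field; lra).
  fold nf in H3. lra.
Qed.

Lemma is_RInt_gen_deriv0 (F dF : R -> C) (K : R) :
  (forall y, is_derive F y (dF y)) ->
  (forall y, @continuous R_UniformSpace (NormedModule.UniformSpace R_AbsRing C_R_NormedModule) dF y) ->
  (forall y, Cmod (F y) <= K / (1 + y ^ 2)) ->
  is_RInt_gen (V := C_R_NormedModule) dF (Rbar_locally m_infty) (Rbar_locally p_infty) (RtoC 0).
Proof.
  intros HD Hc Hf.
  assert (HK := K_nonneg F K Hf).
  intros P [eps Heps]. unfold filtermapi.
  set (M := 2 * K / eps + 1).
  assert (HM0 : 0 <= 2 * K / eps) by (apply Rdiv_le_0_compat; [lra|apply cond_pos]).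
  assert (Hsmall : forall y, M < Rabs y -> Cmod (F y) < eps / 2).
  { intros y Hy. eapply Rle_lt_trans. apply Hf.
    assert (Hep := cond_pos eps).
    assert (HMe : M * eps = 2 * K + eps) by (unfold M; field; lra).
    assert (Ey : Rabs y * Rabs y = y ^ 2) by (unfold Rabs; destruct (Rcase_abs y); ring).
    assert (HM1 : 1 <= M) by (unfold M; lra).
    assert (M * 1 <= Rabs y * Rabs y) by (apply Rmult_le_compat; lra).
    assert (Hy2 : M <= y ^ 2) by lra.
    apply (Rmult_lt_reg_r (1 + y ^ 2)). nra.
    replace (K / (1 + y ^ 2) * (1 + y ^ 2)) with K by (field; nra). nra. }
  assert (HMp : 1 <= M) by (unfold M; lra).
  apply Filter_prod with (fun a => a < - M) (fun b => M < b).
  exists (- M); tauto. exists M; tauto.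
  intros a b Ha Hb. cbn [fst snd].
  exists (minus (F b) (F a)). split.
  apply (is_RInt_derive (V := CV)). intros x _. apply HD. intros x _. apply Hc.
  apply Heps. apply CV_ball.
  change (Cmod (Cminus (Cminus (F b) (F a)) (RtoC 0)) < eps).
  replace (Cminus (Cminus (F b) (F a)) (RtoC 0)) with (Cplus (F b) (Copp (F a))) by ring.
  eapply Rle_lt_trans. apply Cmod_triangle. rewrite Cmod_opp.
  assert (A1 : Cmod (F b) < eps / 2) by (apply Hsmall; rewrite Rabs_right; lra).
  assert (A2 : Cmod (F a) < eps / 2) by (apply Hsmall; rewrite Rabs_left; lra).
  lra.
Qed.

Lemma cont_of_derive (u : R -> C) x du : is_derive u x du ->
  @continuous R_UniformSpace (NormedModule.UniformSpace R_AbsRing C_R_NormedModule) u x.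
Proof. intros H. apply ex_derive_continuous. exists du. exact H. Qed.

Lemma MVI (F dF : R -> C) (h M : R) :
  (forall x, is_derive F x (dF x)) ->
  (forall x, @continuous R_UniformSpace (NormedModule.UniformSpace R_AbsRing C_R_NormedModule) dF x) ->
  (forall x, Rabs x <= Rabs h -> Cmod (dF x) <= M) ->
  Cmod (Cminus (F h) (F 0)) <= M * Rabs h.
Proof.
  intros HD Hc HM.
  assert (H : is_RInt (V := CV) dF 0 h (minus (F h) (F 0))).
  { apply (is_RInt_derive (V := CV)). intros x _; apply HD. intros x _; apply Hc. }
  destruct (Rle_lt_dec 0 h) as [Hh|Hh].
  - assert (H2 := norm_RInt_le (V := C_R_NormedModule) dF (fun _ => M) 0 h (minus (F h) (F 0)) (scal (h - 0) M) Hh).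
    change (Cminus (F h) (F 0)) with (minus (F h) (F 0) : C).
    rewrite Cmod_norm. rewrite Rabs_right by lra.
    replace (M * h) with (scal (h - 0) M). apply H2.
    intros x Hx. rewrite <- Cmod_norm. apply HM. rewrite !Rabs_right; lra.
    exact H. exact (is_RInt_const (V := R_NormedModule) 0 h M).
    change ((h - 0) * M = M * h). ring.
  - assert (H' := is_RInt_swap (V := CV) dF h 0 _ H).
    assert (H2 := norm_RInt_le (V := C_R_NormedModule) dF (fun _ => M) h 0 (opp (minus (F h) (F 0))) (scal (0 - h) M) (Rlt_le _ _ Hh)).
    assert (H3 : norm (K := R_AbsRing) (V := C_R_NormedModule) (opp (minus (F h) (F 0))) <= scal (0 - h) M).
    { apply H2. intros x Hx. rewrite <- Cmod_norm. apply HM. rewrite (Rabs_left h) by lra.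
      unfold Rabs; destruct (Rcase_abs x); lra.
      exact H'. exact (is_RInt_const (V := R_NormedModule) h 0 M). }
    rewrite <- Cmod_norm in H3. change (Cmod (Copp (Cminus (F h) (F 0))) <= scal (0 - h) M) in H3. rewrite Cmod_opp in H3. rewrite Rabs_left by lra.
    replace (M * - h) with (scal (0 - h) M). exact H3.
    change ((0 - h) * M = M * - h). ring.
Qed.

Lemma Re_RtoC_mult (a : R) (s : C) : Re (RtoC a * s) = a * Re s.
Proof. unfold Re, Cmult, RtoC; cbn [fst snd]. ring. Qed.

Lemma dCexp_lin (s : C) x : is_derive (fun y => Cexp (RtoC y * s)) x (s * Cexp (RtoC x * s))%C.
Proof.
  eapply dC_eq. apply dCexp. apply dC_mult. apply dRtoC. apply dC_const.
  apply dCpow_aux2.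
Qed.

Lemma abs_mul_le (x a T : R) : Rabs x <= T -> x * a <= T * Rabs a.
Proof.
  intros H. eapply Rle_trans. apply Rle_abs. rewrite Rabs_mult.
  apply Rmult_le_compat_r. apply Rabs_pos. exact H.
Qed.

Lemma E1_bound (s : C) (tau : R) :
  Cmod (Cexp (RtoC tau * s) - RtoC 1)%C <= Cmod s * exp (Rabs tau * Rabs (Re s)) * Rabs tau.
Proof.
  assert (H := MVI (fun y => Cexp (RtoC y * s)) (fun y => s * Cexp (RtoC y * s))%C tau
                   (Cmod s * exp (Rabs tau * Rabs (Re s)))).
  cbv beta in H.
  replace (Cexp (RtoC 0 * s)) with (RtoC 1) in H.
  apply H.
  - intros x. apply dCexp_lin.
  - intros x. eapply cont_of_derive. apply dC_mult. apply dC_const. apply dCexp_lin.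
  - intros x Hx. rewrite Cmod_mult, Cmod_Cexp, Re_RtoC_mult.
    apply Rmult_le_compat_l. apply Cmod_ge_0. apply exp_le'. apply abs_mul_le. exact Hx.
  - replace (RtoC 0 * s)%C with (RtoC 0) by ring. rewrite Cexp_0. reflexivity.
Qed.

Lemma E2_bound (s : C) (h : R) :
  Cmod (Cexp (RtoC h * s) - RtoC 1 - RtoC h * s)%C <= Cmod s * Cmod s * exp (Rabs h * Rabs (Re s)) * (h * h).
Proof.
  assert (H := MVI (fun y => Cexp (RtoC y * s) - RtoC y * s)%C (fun y => s * (Cexp (RtoC y * s) - RtoC 1))%C h
                   (Cmod s * (Cmod s * exp (Rabs h * Rabs (Re s)) * Rabs h))).
  cbv beta in H.
  replace (Cexp (RtoC h * s) - RtoC 1 - RtoC h * s)%C with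
     (Cminus (Cexp (RtoC h * s) - RtoC h * s) (Cexp (RtoC 0 * s) - RtoC 0 * s))%C.
  eapply Rle_trans. apply H.
  - intros x. eapply dC_eq. apply dC_minus. apply dCexp_lin. apply dC_mult. apply dRtoC. apply dC_const.
    cbv beta. fixC. ring.
  - intros x. eapply cont_of_derive. apply dC_mult. apply dC_const. apply dC_minus. apply dCexp_lin. apply dC_const.
  - intros x Hx. rewrite Cmod_mult. apply Rmult_le_compat_l. apply Cmod_ge_0.
    eapply Rle_trans. apply E1_bound.
    assert (0 <= Cmod s) by apply Cmod_ge_0.
    apply Rmult_le_compat. apply Rmult_le_pos. lra. left; apply exp_pos. apply Rabs_pos.
    apply Rmult_le_compat_l. lra. apply exp_le'. apply Rmult_le_compat_r. apply Rabs_pos. exact Hx.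
    exact Hx.
  - assert (Hh : Rabs h * Rabs h = h * h) by (unfold Rabs; destruct (Rcase_abs h); ring).
    rewrite <- Hh. right. ring.
  - replace (RtoC 0 * s)%C with (RtoC 0) by ring. rewrite Cexp_0. ring.
Qed.

Definition Fm := Rbar_locally m_infty.
Definition Fp := Rbar_locally p_infty.

Lemma Gf_int (nu rho c t : R) : 0 < nu < 1 -> 0 < c ->
  is_RInt_gen (V := C_R_NormedModule) (Gf nu rho c t) (Rbar_locally m_infty) (Rbar_locally p_infty)
    (RInt_gen (V := CV) (bromwich_integrand nu rho c t) (Rbar_locally m_infty) (Rbar_locally p_infty)).
Proof.
  intros Hnu Hc.
  destruct (Gf_bound nu rho c t Hnu Hc) as [K [_ HK]].
  destruct (ex_RInt_gen_maj (Gf nu rho c t) K (fun y => Gf_cont nu rho c t y Hc) HK) as [l Hl].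
  change (bromwich_integrand nu rho c t) with (Gf nu rho c t).
  rewrite (is_RInt_gen_unique (V := CV) (FFa := Proper_StrongProper _ (Rbar_locally_filter _))
             (FFb := Proper_StrongProper _ (Rbar_locally_filter _)) (Gf nu rho c t) l Hl).
  exact Hl.
Qed.

Lemma is_RInt_gen_Cmult (f : R -> C) (k : R) (l : C) :
  is_RInt_gen (V := C_R_NormedModule) f (Rbar_locally m_infty) (Rbar_locally p_infty) l ->
  is_RInt_gen (V := C_R_NormedModule) (fun y => RtoC k * f y)%C (Rbar_locally m_infty) (Rbar_locally p_infty) (RtoC k * l)%C.
Proof.
  intros H.
  assert (H' := is_RInt_gen_scal (V := C_R_NormedModule) f k l H).
  replace (fun y => RtoC k * f y)%C with (fun y => scal (V := C_R_NormedModule) k (f y)).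
  replace (RtoC k * l)%C with (scal (V := C_R_NormedModule) k l). exact H'.
  apply scal_R_Cmult.
  apply functional_extensionality. intros y. apply scal_R_Cmult.
Qed.

Lemma Ci_aux (q e : C) : (RtoC 0 * q + - Ci * (Ci * e))%C = e.
Proof. destruct q, e. apply injective_projections; simpl; ring. Qed.

Lemma Cmod_mCi (z : C) : Cmod (- Ci * z)%C = Cmod z.
Proof.
  rewrite Cmod_mult, Cmod_opp. replace (Cmod Ci) with 1. ring.
  unfold Cmod, Ci; simpl. replace (0 * (0 * 1) + 1 * (1 * 1)) with 1 by ring. symmetry. apply sqrt_1.
Qed.

Lemma part1 (nu mu c t : R) : 0 < nu < 1 -> 0 < c ->
  (RtoC t * RInt_gen (V := CV) (bromwich_integrand nu (mu - 1) c t) (Rbar_locally m_infty) (Rbar_locally p_infty)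
   - RtoC (mu - 1) * RInt_gen (V := CV) (bromwich_integrand nu mu c t) (Rbar_locally m_infty) (Rbar_locally p_infty)
   - RtoC nu * RInt_gen (V := CV) (bromwich_integrand nu (mu - nu) c t) (Rbar_locally m_infty) (Rbar_locally p_infty))%C
  = RtoC 0.
Proof.
  intros Hnu Hc.
  set (I1 := RInt_gen (V := CV) (bromwich_integrand nu (mu - 1) c t) (Rbar_locally m_infty) (Rbar_locally p_infty)).
  set (I0 := RInt_gen (V := CV) (bromwich_integrand nu mu c t) (Rbar_locally m_infty) (Rbar_locally p_infty)).
  set (I2 := RInt_gen (V := CV) (bromwich_integrand nu (mu - nu) c t) (Rbar_locally m_infty) (Rbar_locally p_infty)).
  assert (H1 := is_RInt_gen_Cmult _ t _ (Gf_int nu (mu - 1) c t Hnu Hc)).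
  assert (H0 := is_RInt_gen_Cmult _ (mu - 1) _ (Gf_int nu mu c t Hnu Hc)).
  assert (H2 := is_RInt_gen_Cmult _ nu _ (Gf_int nu (mu - nu) c t Hnu Hc)).
  fold I1 I0 I2 in H1, H0, H2.
  assert (HA := is_RInt_gen_minus _ _ _ _ (is_RInt_gen_minus _ _ _ _ H1 H0) H2).
  set (dF := fun y => (RtoC t * Gf nu (mu - 1) c t y - RtoC (mu - 1) * Gf nu mu c t y
                        - RtoC nu * Gf nu (mu - nu) c t y)%C).
  change (is_RInt_gen (V := C_R_NormedModule) dF (Rbar_locally m_infty) (Rbar_locally p_infty)
            (RtoC t * I1 - RtoC (mu - 1) * I0 - RtoC nu * I2)%C) in HA.
  destruct (Gf_bound nu (mu - 1) c t Hnu Hc) as [K [_ HK]].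
  assert (HB : is_RInt_gen (V := C_R_NormedModule) dF (Rbar_locally m_infty) (Rbar_locally p_infty) (RtoC 0)).
  { apply (is_RInt_gen_deriv0 (fun y => - Ci * Gf nu (mu - 1) c t y)%C dF K).
    - intros y. eapply dC_eq. apply dC_mult. apply dC_const. apply dGf. exact Hc.
      replace (mu - 1 + 1) with mu by ring. replace (mu - 1 + 1 - nu) with (mu - nu) by ring.
      apply Ci_aux.
    - intros y. eapply cont_of_derive. unfold dF.
      apply dC_minus. apply dC_minus.
      apply dC_mult. apply dC_const. apply dGf. exact Hc.
      apply dC_mult. apply dC_const. apply dGf. exact Hc.
      apply dC_mult. apply dC_const. apply dGf. exact Hc.
    - intros y. rewrite Cmod_mCi. apply HK. }
  assert (E1 := is_RInt_gen_unique (V := CV) (FFa := Proper_StrongProper _ (Rbar_locally_filter _))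
             (FFb := Proper_StrongProper _ (Rbar_locally_filter _)) dF _ HA).
  assert (E2 := is_RInt_gen_unique (V := CV) (FFa := Proper_StrongProper _ (Rbar_locally_filter _))
             (FFb := Proper_StrongProper _ (Rbar_locally_filter _)) dF _ HB).
  rewrite <- E1. exact E2.
Qed.

Lemma Rh_aux (A A' P E s Eh : C) (h : R) :
  (A * Eh * P * E - A * P * E - RtoC h * (A * (P * s) * E))%C = (A * P * E * (Eh - RtoC 1 - RtoC h * s))%C.
Proof. ring. Qed.

Lemma Rh_bound (nu mu c t h y : R) : 0 < c ->
  Cmod (Gf nu mu c (t + h) y - Gf nu mu c t y - RtoC h * Gf nu (mu - 1) c t y)%C
  <= exp (Rabs h * c) * (h * h) * Cmod (Gf nu (mu - 2) c t y).
Proof.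
  intros Hc. unfold Gf.
  rewrite RtoC_plus, Cmult_plus_distr_r, Cexp_add.
  replace (- (mu - 1)) with (- mu + 1) by ring.
  replace (- (mu - 2)) with (- mu + 1 + 1) by ring.
  rewrite <- !Cpow_add, !Cpow_one_line by exact Hc.
  set (A := Cexp (RtoC t * (c, y))). set (P := Defs.Cpow (c, y) (- mu)).
  set (E := Cexp (- Defs.Cpow (c, y) nu)). set (Eh := Cexp (RtoC h * (c, y))).
  rewrite (Rh_aux A A P E (c, y) Eh h).
  rewrite !Cmod_mult.
  assert (HE2 := E2_bound (c, y) h). fold Eh in HE2.
  replace (Rabs (Re (c, y))) with c in HE2 by (unfold Re; simpl; rewrite Rabs_right; lra).
  assert (0 <= Cmod A) by apply Cmod_ge_0. assert (0 <= Cmod P) by apply Cmod_ge_0.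
  assert (0 <= Cmod E) by apply Cmod_ge_0.
  replace (exp (Rabs h * c) * (h * h) * (Cmod A * (Cmod P * Cmod (c, y) * Cmod (c, y)) * Cmod E))
    with (Cmod A * Cmod P * Cmod E * (Cmod (c, y) * Cmod (c, y) * exp (Rabs h * c) * (h * h))) by ring.
  apply Rmult_le_compat_l. apply Rmult_le_pos; [apply Rmult_le_pos|]; assumption.
  exact HE2.
Qed.

Lemma quad_est (nu mu c t : R) : 0 < nu < 1 -> 0 < c ->
  exists C, forall h, Rabs h <= 1 ->
    Cmod (RInt_gen (V := CV) (bromwich_integrand nu mu c (t + h)) (Rbar_locally m_infty) (Rbar_locally p_infty)
          - RInt_gen (V := CV) (bromwich_integrand nu mu c t) (Rbar_locally m_infty) (Rbar_locally p_infty)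
          - RtoC h * RInt_gen (V := CV) (bromwich_integrand nu (mu - 1) c t) (Rbar_locally m_infty) (Rbar_locally p_infty))%C
    <= C * (h * h).
Proof.
  intros Hnu Hc.
  destruct (Gf_bound nu (mu - 2) c t Hnu Hc) as [K2 [HK2p HK2]].
  exists (exp c * K2 * PI). intros h Hh.
  assert (HA := is_RInt_gen_minus _ _ _ _
                 (is_RInt_gen_minus _ _ _ _ (Gf_int nu mu c (t + h) Hnu Hc) (Gf_int nu mu c t Hnu Hc))
                 (is_RInt_gen_Cmult _ h _ (Gf_int nu (mu - 1) c t Hnu Hc))).
  set (Rf := fun y => (Gf nu mu c (t + h) y - Gf nu mu c t y - RtoC h * Gf nu (mu - 1) c t y)%C).
  change (is_RInt_gen (V := C_R_NormedModule) Rf (Rbar_locally m_infty) (Rbar_locally p_infty)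
    (RInt_gen (V := CV) (bromwich_integrand nu mu c (t + h)) (Rbar_locally m_infty) (Rbar_locally p_infty)
          - RInt_gen (V := CV) (bromwich_integrand nu mu c t) (Rbar_locally m_infty) (Rbar_locally p_infty)
          - RtoC h * RInt_gen (V := CV) (bromwich_integrand nu (mu - 1) c t) (Rbar_locally m_infty) (Rbar_locally p_infty))%C) in HA.
  replace (exp c * K2 * PI * (h * h)) with ((exp c * (h * h) * K2) * PI) by ring.
  apply (is_RInt_gen_bound Rf (exp c * (h * h) * K2)); [|exact HA].
  intros y. unfold Rf. eapply Rle_trans. apply Rh_bound. exact Hc.
  assert (Hex : exp (Rabs h * c) <= exp c) by (apply exp_le'; nra).
  assert (Hhh : 0 <= h * h) by nra.
  assert (Hg := HK2 y).
  assert (Hy : 0 < 1 + y ^ 2) by nra.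
  replace (exp c * (h * h) * K2 / (1 + y ^ 2)) with (exp c * (h * h) * (K2 / (1 + y ^ 2))) by (field; lra).
  apply Rmult_le_compat. apply Rmult_le_pos. left; apply exp_pos. exact Hhh. apply Cmod_ge_0.
  apply Rmult_le_compat_r. exact Hhh. exact Hex. exact Hg.
Qed.

Lemma derive_of_quad (Phi : R -> C) (t : R) (L : C) (C0 : R) :
  (forall h, Rabs h <= 1 -> Cmod (Phi (t + h)%R - Phi t - RtoC h * L)%C <= C0 * (h * h)) ->
  is_derive Phi t L.
Proof.
  intros HQ. unfold is_derive, filterdiff. split. apply is_linear_scal_l.
  intros x Hx. apply (@is_filter_lim_locally_unique R_AbsRing (AbsRing_NormedModule R_AbsRing)) in Hx. subst x.
  intros eps.
  assert (Hep := cond_pos eps).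
  assert (HC1 : 0 < Rabs C0 + 1) by (assert (0 <= Rabs C0) by apply Rabs_pos; lra).
  assert (Hd : 0 < Rmin 1 (eps / (Rabs C0 + 1))) by (apply Rmin_glb_lt; [lra|apply Rdiv_lt_0_compat; lra]).
  exists (mkposreal _ Hd). intros u Hu.
  change (Rabs (u - t) < Rmin 1 (eps / (Rabs C0 + 1))) in Hu.
  assert (Hd1 : Rmin 1 (eps / (Rabs C0 + 1)) <= 1) by apply Rmin_l.
  assert (Hd2 : Rmin 1 (eps / (Rabs C0 + 1)) <= eps / (Rabs C0 + 1)) by apply Rmin_r.
  assert (E : norm (K := R_AbsRing) (V := C_R_NormedModule) (minus (minus (Phi u) (Phi t)) (scal (minus u t) L))
              = Cmod (Phi (t + (u - t))%R - Phi t - RtoC (u - t)%R * L)%C).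
  { rewrite Cmod_norm. rewrite Rplus_minus. rewrite <- scal_R_Cmult. reflexivity. }
  eapply Rle_trans; [right; exact E|]. change (Cmod (Phi (t + (u - t))%R - Phi t - RtoC (u - t)%R * L)%C <= eps * Rabs (u - t)).
  eapply Rle_trans. apply HQ. lra.
  set (h := u - t) in *.
  assert (Hh : Rabs h * Rabs h = h * h) by (unfold Rabs; destruct (Rcase_abs h); ring).
  assert (Hah := Rabs_pos h).
  eapply Rle_trans. apply Rmult_le_compat_r. nra. apply Rle_abs.
  rewrite <- Hh.
  assert (Hc0 := Rabs_pos C0).
  assert (H1 : Rabs C0 * Rabs h <= eps).
  { apply Rle_trans with (Rabs C0 * (eps / (Rabs C0 + 1))). apply Rmult_le_compat_l; lra.
    apply Rle_trans with ((Rabs C0 + 1) * (eps / (Rabs C0 + 1))). apply Rmult_le_compat_r. 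
    left; apply Rdiv_lt_0_compat; lra. lra. right; field; lra. }
  replace (Rabs C0 * (Rabs h * Rabs h)) with ((Rabs C0 * Rabs h) * Rabs h) by ring.
  apply Rmult_le_compat_r; assumption.
Qed.

Lemma alg1 (t a b k I1 I0 I2 : C) : (t * I1 - a * I0 - b * I2 = RtoC 0)%C ->
  (t * (k * I1) = a * (k * I0) + b * (k * I2))%C.
Proof.
  intros H. transitivity (k * (t * I1 - a * I0 - b * I2) + (a * (k * I0) + b * (k * I2)))%C.
  ring. rewrite H. ring.
Qed.

Lemma alg2 (k P L : C) : (RtoC 0 * P + k * L = k * L)%C.
Proof. ring. Qed.

Lemma is_derive_C_unique (u : R -> C) x (l1 l2 : C) : is_derive u x l1 -> is_derive u x l2 -> l1 = l2.
Proof.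
  intros H1 H2.
  apply injective_projections.
  - rewrite <- (is_derive_unique _ _ _ (is_derive_fst u x l1 H1)).
    rewrite <- (is_derive_unique _ _ _ (is_derive_fst u x l2 H2)). reflexivity.
  - rewrite <- (is_derive_unique _ _ _ (is_derive_snd u x l1 H1)).
    rewrite <- (is_derive_unique _ _ _ (is_derive_snd u x l2 H2)). reflexivity.
Qed.

Theorem mainTheorem4 (nu mu c : R) :
  0 < nu < 1 -> 0 <= mu < 1 -> 0 < c ->
  forall t : R, 0 < t ->
    (RtoC t * f_nu_rho nu (mu - 1) c t
       = RtoC (mu - 1) * f_nu_rho nu mu c t + RtoC nu * f_nu_rho nu (mu - nu) c t)%C
    /\ is_derive (fun u : R => f_nu_rho nu mu c u) t (f_nu_rho nu (mu - 1) c t)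
    /\ (forall df : C, is_derive (fun u : R => f_nu_rho nu mu c u) t df ->
          (RtoC t * df
             = RtoC (mu - 1) * f_nu_rho nu mu c t + RtoC nu * f_nu_rho nu (mu - nu) c t)%C).
Proof.
  intros Hnu Hmu Hc t Ht.
  assert (PA : (RtoC t * f_nu_rho nu (mu - 1) c t
       = RtoC (mu - 1) * f_nu_rho nu mu c t + RtoC nu * f_nu_rho nu (mu - nu) c t)%C).
  { unfold f_nu_rho. apply alg1. exact (part1 nu mu c t Hnu Hc). }
  assert (PB : is_derive (fun u : R => f_nu_rho nu mu c u) t (f_nu_rho nu (mu - 1) c t)).
  { unfold f_nu_rho.
    destruct (quad_est nu mu c t Hnu Hc) as [C0 HC0].
    assert (HD := derive_of_quad (fun u => RInt_gen (V := CV) (bromwich_integrand nu mu c u) (Rbar_locally m_infty) (Rbar_locally p_infty))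
                    t _ C0 HC0).
    eapply dC_eq. apply dC_mult. apply dC_const. exact HD.
    apply alg2. }
  split; [exact PA|]. split; [exact PB|].
  intros df Hdf. rewrite (is_derive_C_unique _ _ _ _ Hdf PB). exact PA.
Qed.
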